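(* Let $E_1$ be a Stone space with at least five points, let $k\in E_1$ be an isolated point, and let $E$ be the Stone space system $(E_1,\{k\})$. Then $\mathrm{Aut}(\mathscr{C}_w(E))\cong\mathrm{Aut}(\mathscr{C}(E_1))$ as groups.
   Context: A Stone space is a compact, Hausdorff, totally disconnected topological space. A cut of a Stone space $X$ is an unordered partition of $X$ into two disjoint clopen sets $U,V$, written $U\sqcup V$; it is non-peripheral if each of $U,V$ contains at least two points. Two cuts $U\sqcup V$, $U'\sqcup V'$ cross if all four sets $U\cap U'$, $U\cap V'$, $V\cap U'$, $V\cap V'$ are nonempty; otherwise they are compatible. The complex of cuts $\mathscr{C}(X)$ is the simplicial graph whose vertices are the non-peripheral cuts of $X$, with edges between distinct compatible cuts. A Stone space system is a properly nested collection of Stone spaces $E_n\subsetneq\cdots\subsetneq E_2\subsetneq E_1$, $n\ge 2$; a cut of the system is a cut of $E_1$. A cut $U\sqcup V$ of the system is weakly non-peripheral if each of $U$ and $V$ either contains at least two points or contains at least one point of $E_2$. The weak complex of cuts $\mathscr{C}_w(E)$ is the simplicial graph whose vertices are the weakly non-peripheral cuts, with an edge between distinct compatible cuts. *)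

(* Defs.v *)
From HB Require Import structures.
From mathcomp Require Import all_boot all_order.
From mathcomp Require Import all_classical all_reals all_analysis.
Set Implicit Arguments. Unset Strict Implicit. Unset Printing Implicit Defensive.
Local Open Scope classical_set_scope.

Definition stone_space (X : topologicalType) : Prop :=
  [/\ compact [set: X], hausdorff_space X & totally_disconnected [set: X]].

Definition is_cut {X : topologicalType} (P : set (set X)) : Prop :=
  exists U V : set X, [/\ P = [set U; V], clopen U, clopen V,
                          U `&` V = set0 & U `|` V = setT].

Definition has_two_points {X : Type} (A : set X) : Prop :=
  exists x y, [/\ x <> y, A x & A y].

Definition nonperipheral_cut {X : topologicalType} (P : set (set X)) : Prop :=
  is_cut P /\ forall A, P A -> has_two_points A.

Definition weakly_nonperipheral_cut {X : topologicalType} (E2 : set X)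
  (P : set (set X)) : Prop :=
  is_cut P /\ forall A, P A -> has_two_points A \/ exists x, E2 x /\ A x.

Definition cuts_cross {X : Type} (P Q : set (set X)) : Prop :=
  forall A B, P A -> Q B -> A `&` B !=set0.

Definition cuts_compatible {X : Type} (P Q : set (set X)) : Prop :=
  ~ cuts_cross P Q.

Definition cut_vertex (X : topologicalType) :=
  {P : set (set X) | nonperipheral_cut P}.
Definition wcut_vertex (X : topologicalType) (E2 : set X) :=
  {P : set (set X) | weakly_nonperipheral_cut E2 P}.

Definition cut_adj (X : topologicalType) (a b : cut_vertex X) : Prop :=
  a <> b /\ cuts_compatible (proj1_sig a) (proj1_sig b).
Definition wcut_adj (X : topologicalType) (E2 : set X)
  (a b : wcut_vertex E2) : Prop :=
  a <> b /\ cuts_compatible (proj1_sig a) (proj1_sig b).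

Definition graph_aut {V : Type} (adj : V -> V -> Prop) (f : V -> V) : Prop :=
  bijective f /\ forall a b, adj a b <-> adj (f a) (f b).

Definition aut_groups_isomorphic {V W : Type}
  (adjV : V -> V -> Prop) (adjW : W -> W -> Prop) : Prop :=
  exists Phi : (V -> V) -> (W -> W),
    [/\ (forall f, graph_aut adjV f -> graph_aut adjW (Phi f)),
        (forall f g, graph_aut adjV f -> graph_aut adjV g ->
                     Phi f = Phi g -> f = g),
        (forall h, graph_aut adjW h -> exists2 f, graph_aut adjV f & Phi f = h)
      & (forall f g, graph_aut adjV f -> graph_aut adjV g ->
                     Phi (f \o g) = Phi f \o Phi g)].

(* Main.v *)
Require Import Defs.
From HB Require Import structures.
From mathcomp Require Import all_boot all_order.
From mathcomp Require Import all_classical all_reals all_analysis.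
Local Open Scope classical_set_scope.

Lemma split_clopen (X : topologicalType) (hX : stone_space X) (U : set X) :
  clopen U -> has_two_points U ->
  exists A : set X, [/\ clopen A, A `<=` U, A !=set0 & exists y, U y /\ ~ A y].
Proof.
move=> [oU cU] [u1 [u2 [u12 Uu1 Uu2]]].
apply: contrapT => H.
have cnU : connected U.
  move=> B B0 [C oC BC] [D cD BD].
  apply/seteqP; split; first by rewrite BC; apply: subIsetl.
  move=> y Uy; apply: contrapT => nBy; apply: H; exists B; split => //.
  - by split; [rewrite BC; apply: openI | rewrite BD; apply: closedI].
  - by rewrite BC; apply: subIsetl.
  - by exists y.
case: hX => _ _ td.
have := connected_component_max Uu1 (@subsetT _ U) cnU.
rewrite td // => /(_ u2 Uu2) /= e; exact: u12 (esym e).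
Qed.

Lemma cut_nocross (X : topologicalType) (P : set (set X)) : is_cut P -> ~ cuts_cross P P.
Proof.
move=> [U [V [-> _ _ UV _]]] /(_ U V (or_introl erefl) (or_intror erefl)).
by rewrite UV => -[x].
Qed.

Lemma cross_exists (X : topologicalType) (hX : stone_space X)
  (split : forall U : set X, clopen U -> has_two_points U ->
    exists A : set X, [/\ clopen A, A `<=` U, A !=set0 & exists y, U y /\ ~ A y])
  (P : set (set X)) : nonperipheral_cut P ->
  exists Q, nonperipheral_cut Q /\ cuts_cross P Q.
Proof.
move=> [[U [V [PE cU cV UV UVT]]] h2].
have [A [cA AU [u1 Au1] [u2 [Uu2 nAu2]]]] := split U cU (h2 U ltac:(rewrite PE; by left)).
have [B [cB BV [v1 Bv1] [v2 [Vv2 nBv2]]]] := split V cV (h2 V ltac:(rewrite PE; by right)).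
have disj : forall x, U x -> V x -> False.
  by move=> x Ux Vx; have : (U `&` V) x by []; rewrite UV.
exists [set A `|` B; ~` (A `|` B)]; split; first split.
- exists (A `|` B), (~` (A `|` B)); split => //.
  + exact: clopenU.
  + exact: clopenC (clopenU cA cB).
  + by rewrite setICr.
  + by rewrite setUCr.
- move=> W [->|->].
  + exists u1, v1; split; [|by left|by right].
    by move=> e; apply: (disj u1); [exact: AU|rewrite e; exact: BV].
  + exists u2, v2; split.
    * by move=> e; apply: (disj u2) => //; rewrite e.
    * move=> [//|/BV Vu2]; exact: disj Uu2 Vu2.
    * move=> [/AU Uv2|//]; exact: disj Uv2 Vv2.
- rewrite PE => W1 W2 [->|->] [->|->].
  + by exists u1; split => //; [exact: AU|left].
  + exists u2; split => //; move=> [//|/BV Vu2]; exact: disj Uu2 Vu2.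
  + by exists v1; split => //; [exact: BV|right].
  + exists v2; split => //; move=> [/AU Uv2|//]; exact: disj Uv2 Vv2.
Qed.

Definition c0set {X : Type} (k : X) : set (set X) := [set [set k]; ~` [set k]].

Lemma c0_weak (X : topologicalType) (hX : stone_space X)
  (h5 : exists f : 'I_5 -> X, injective f) (k : X) (hk : open [set k]) :
  weakly_nonperipheral_cut [set k] (c0set k).
Proof.
have ck : clopen [set k].
  split => //; case: hX => _ hs _.
  exact/accessible_closed_set1/hausdorff_accessible.
rewrite /weakly_nonperipheral_cut /is_cut; split.
  exists [set k], (~` [set k]); split => //.
  - exact: (@clopenC _ _ [set k] ck).
  - by rewrite setICr.
  - by rewrite setUCr.
move=> A [->|->]; first by right; exists k.
left; case: h5 => f inj.
have d : forall i j : 'I_5, val i <> val j -> f i <> f j.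
  by move=> i j nij /inj e; apply: nij; rewrite e.
pose i0 := (@Ordinal 5 0 isT); pose i1 := (@Ordinal 5 1 isT); pose i2 := (@Ordinal 5 2 isT).
have d01 := d i0 i1 ltac:(done); have d02 := d i0 i2 ltac:(done);
have d12 := d i1 i2 ltac:(done).
case: (pselect (f i0 = k)) => [e0|n0].
  exists (f i1), (f i2); split => //=.
  - by move=> e; apply: d01; rewrite e0 e.
  - by move=> e; apply: d02; rewrite e0 e.
case: (pselect (f i1 = k)) => [e1|n1].
  by exists (f i0), (f i2); split => //= e; apply: d12; rewrite e1 e.
by exists (f i0), (f i1).
Qed.

Lemma c0_notnp (X : topologicalType) (k : X) : ~ nonperipheral_cut (c0set k).
Proof.
move=> [_ /(_ [set k] (or_introl erefl))] [x [y [xy /= xk yk]]]; apply: xy; by rewrite xk yk.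
Qed.

Lemma c0_compat (X : topologicalType) (k : X) (Q : set (set X)) :
  is_cut Q -> ~ cuts_cross (c0set k) Q.
Proof.
move=> [U [V [-> _ _ UV _]]] cr.
have [x [/= -> Uk]] := cr [set k] U (or_introl erefl) (or_introl erefl).
have [y [/= -> Vk]] := cr [set k] V (or_introl erefl) (or_intror erefl).
by have : (U `&` V) k by []; rewrite UV.
Qed.

Lemma cross_sym (X : Type) (P Q : set (set X)) : cuts_cross P Q -> cuts_cross Q P.
Proof. by move=> c A B QA PB; rewrite setIC; exact: c. Qed.

Lemma weak_cases (X : topologicalType) (k : X) (P : set (set X)) :
  weakly_nonperipheral_cut [set k] P -> nonperipheral_cut P \/ P = c0set k.
Proof.
move=> [[U [V [PE cU cV UV UVT]]] hw].
have Vc : V = ~` U.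
  apply/seteqP; split => x.
    by move=> Vx Ux; have : (U `&` V) x by []; rewrite UV.
  move=> nUx; have : (U `|` V) x by rewrite UVT.
  by case.
have sing : forall A, P A -> ~ has_two_points A -> A = [set k].
  move=> A PA nA; case: (hw A PA) => // -[x [/= xk Ak]]; subst x.
  apply/seteqP; split => y /=; last by move=> ->.
  move=> Ay; apply: contrapT => nyk; apply: nA; exists y, k; split => //.
case: (pselect (has_two_points U)) => hU; last first.
  right; have Uk := sing U ltac:(rewrite PE; by left) hU.
  by rewrite PE Vc Uk.
case: (pselect (has_two_points V)) => hV; last first.
  right; have Vk := sing V ltac:(rewrite PE; by right) hV.
  have UV' : U = ~` V by rewrite Vc setCK.
  by rewrite PE UV' Vk /c0set setUC.
left; split; first by exists U, V.
by rewrite PE => A [->|->].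
Qed.

Lemma sigeq (A : Type) (Q : A -> Prop) (a b : {x | Q x}) :
  proj1_sig a = proj1_sig b -> a = b.
Proof.
case: a => x qx; case: b => y qy /= exy; subst y.
by rewrite (Prop_irrelevance qx qy).
Qed.

Lemma aut_inv (V : Type) (adj : V -> V -> Prop) (f g : V -> V) :
  graph_aut adj f -> cancel f g -> cancel g f -> graph_aut adj g.
Proof.
move=> [_ hf] fg gf; split; first by exists f.
move=> a b; split => H.
  by apply/hf; rewrite !gf.
by move/hf: H; rewrite !gf.
Qed.

Lemma aut_comp (V : Type) (adj : V -> V -> Prop) (f g : V -> V) :
  graph_aut adj f -> graph_aut adj g -> graph_aut adj (f \o g).
Proof.
move=> [bf hf] [bg hg]; split; first exact: bij_comp.
move=> a b /=; split => H.
  by apply/(hf (g a) (g b))/(hg a b).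
by apply/(hg a b)/(hf (g a) (g b)).
Qed.

Theorem mainTheorem3 (X : topologicalType) (hX : stone_space X)
  (h5 : exists f : 'I_5 -> X, injective f)
  (k : X) (hk : open [set k]) :
  aut_groups_isomorphic (@wcut_adj X [set k]) (@cut_adj X).
Proof.
have npw : forall P, nonperipheral_cut P -> weakly_nonperipheral_cut [set k] P.
  by move=> P [c h]; split => // A PA; left; exact: h.
pose c0v : wcut_vertex [set k] := exist _ (c0set k) (@c0_weak X hX h5 k hk).
pose incl (a : cut_vertex X) : wcut_vertex [set k] :=
  exist _ (proj1_sig a) (npw _ (proj2_sig a)).
have incl_inj : injective incl.
  by move=> a b /(congr1 (@proj1_sig _ _)) /= e; apply: sigeq.
have incl_neq : forall a, incl a <> c0v.
  move=> a /(congr1 (@proj1_sig _ _)) /= e; apply: (@c0_notnp X k).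
  by rewrite -e; exact: (proj2_sig a).
have cases : forall w, w = c0v \/ exists a, w = incl a.
  move=> [P hP]; case: (@weak_cases X k P hP) => [np|e].
    by right; exists (exist _ P np); apply: sigeq.
  by left; apply: sigeq.
have adjc0E : forall w, wcut_adj c0v w = (w <> c0v).
  move=> w; apply: propext; split; first by move=> [ne _] e; apply: ne.
  move=> ne; split; first by move=> e; apply: ne.
  exact: c0_compat (proj2_sig w).1.
have adjc0E' : forall w, wcut_adj w c0v = (w <> c0v).
  move=> w; apply: propext; split; first by move=> [ne _].
  move=> ne; split => // /cross_sym; exact: c0_compat (proj2_sig w).1.
have adjinclE : forall a b, cut_adj a b = wcut_adj (incl a) (incl b).
  move=> a b; apply: propext; split; move=> [ne c]; split => //.
    by move=> /incl_inj.
  by move=> e; apply: ne; rewrite e.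
have nonuniv : forall w, w <> c0v -> exists w', w' <> w /\ ~ wcut_adj w w'.
  move=> w; case: (cases w) => [->//|[a ->]] _.
  have [Q [hQ cr]] := @cross_exists X hX (@split_clopen X hX) _ (proj2_sig a).
  exists (incl (exist _ Q hQ)); split.
    move=> /(congr1 (@proj1_sig _ _)) /= e; rewrite e in cr.
    exact: (@cut_nocross X _ (proj2_sig a).1 cr).
  by move=> [_ c]; apply: c.
have fixc0 : forall f, graph_aut (@wcut_adj X [set k]) f -> f c0v = c0v.
  move=> f [[g fg gf] hf]; apply: contrapT => ne.
  have [w' [ne' nadj]] := nonuniv _ ne.
  have gne : g w' <> c0v.
    by move=> e; apply: ne'; have := gf w'; rewrite e => ->.
  apply: nadj; rewrite -(gf w'); apply/(hf c0v (g w')); rewrite adjc0E; exact: gne.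
pose Phi := fun (f : wcut_vertex [set k] -> wcut_vertex [set k]) (a : cut_vertex X) =>
  match pselect (nonperipheral_cut (proj1_sig (f (incl a)))) with
  | left H => exist _ (proj1_sig (f (incl a))) H
  | right _ => a end.
have Phi_spec : forall f a, graph_aut (@wcut_adj X [set k]) f ->
    incl (Phi f a) = f (incl a).
  move=> f a hf; have fne : f (incl a) <> c0v.
    move=> e; apply: (incl_neq a).
    have fi : injective f by case: hf => [[g fg _] _]; exact: can_inj fg.
    by apply: fi; rewrite e (fixc0 f hf).
  rewrite /Phi; case: pselect => [H|nH]; first by apply: sigeq.
  exfalso; case: (cases (f (incl a))) => [//|[b e]]; apply: nH; rewrite e.
  exact: (proj2_sig b).
pose Ext := fun (h : cut_vertex X -> cut_vertex X) (w : wcut_vertex [set k]) =>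
  match pselect (nonperipheral_cut (proj1_sig w)) with
  | left H => incl (h (exist _ (proj1_sig w) H))
  | right _ => w end.
have Ext_incl : forall h a, Ext h (incl a) = incl (h a).
  move=> h a; rewrite /Ext; case: pselect => [H|nH].
    by congr (incl (h _)); apply: sigeq.
  by exfalso; apply: nH; exact: (proj2_sig a).
have Ext_c0 : forall h, Ext h c0v = c0v.
  move=> h; rewrite /Ext; case: pselect => [H|//].
  by exfalso; exact: (@c0_notnp X k H).
have Ext_aut : forall h, graph_aut (@cut_adj X) h -> graph_aut (@wcut_adj X [set k]) (Ext h).
  move=> h [[g hg gh] hh]; split.
    exists (Ext g) => w; case: (cases w) => [->|[a ->]];
      by rewrite ?Ext_c0 ?Ext_incl ?hg ?gh.
  move=> w1 w2; case: (cases w1) => [->|[a ->]]; case: (cases w2) => [->|[b ->]];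
    rewrite ?Ext_c0 ?Ext_incl.
  - by split.
  - by rewrite !adjc0E; split => _; exact: incl_neq.
  - by rewrite !adjc0E'; split => _; exact: incl_neq.
  - by rewrite -!adjinclE; exact: hh.
exists Phi; split.
- move=> f hf; have [[g fg gf] adjf] := hf.
  have hg := @aut_inv _ _ f g hf fg gf.
  split.
    exists (Phi g) => a; apply: incl_inj.
      by rewrite (Phi_spec g _ hg) (Phi_spec f a hf) fg.
    by rewrite (Phi_spec f _ hf) (Phi_spec g a hg) gf.
  by move=> a b; rewrite !adjinclE (Phi_spec f a hf) (Phi_spec f b hf); exact: adjf.
- move=> f g hf hg e; apply: funext => w; case: (cases w) => [->|[a ->]].
    by rewrite (fixc0 f hf) (fixc0 g hg).
  by rewrite -(Phi_spec f a hf) -(Phi_spec g a hg) e.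
- move=> h hh; exists (Ext h); first exact: Ext_aut.
  apply: funext => a; apply: incl_inj.
  by rewrite (Phi_spec _ a (Ext_aut h hh)) Ext_incl.
- move=> f g hf hg; apply: funext => a; apply: incl_inj.
  rewrite (Phi_spec _ a (@aut_comp _ _ f g hf hg)) /=.
  by rewrite -(Phi_spec g a hg) -(Phi_spec f _ hf).
Qed.
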